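(* Let $\mathbb{F}$ be a field of characteristic zero and $n\le m$ natural numbers. Then $W_{n,m}=\mathrm{span}_{\mathbb{F}}\{P_O: O\in\Omega_{n,m}\}$.
   Context: $\mathbb{F}\langle X\rangle$ is the free non-unitary associative algebra on $X=\{x_1,x_2,\dots\}$; $(x^n)^T$ is the smallest ideal containing $x^n$ invariant under all algebra endomorphisms; $V_m$ is the space of multilinear polynomials of degree $m$ in $x_1,\dots,x_m$; $W_{n,m}:=V_m\cap(x^n)^T$. An ordered partition of $[m]=\{1,\dots,m\}$ into $n$ parts is a set $O=\{A_1,\dots,A_n\}$ of nonempty ordered lists $A_i$ of elements of $[m]$ whose underlying sets are pairwise disjoint with union $[m]$; $\Omega_{n,m}$ is the set of these. For a list $A=[\![ab\cdots c]\!]$, $x_A:=x_ax_b\cdots x_c$, and $P_O:=\sum_{\sigma\in S_n}x_{A_{\sigma(1)}}\cdots x_{A_{\sigma(n)}}$. *)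

(* Defs.v *)
From HB Require Import structures.
From mathcomp Require Import all_boot all_order all_algebra all_fingroup.
From mathcomp Require Import monalg.
Set Implicit Arguments. Unset Strict Implicit. Unset Printing Implicit Defensive.
Import GRing.Theory.
Local Open Scope ring_scope.

(* The letter i : nat stands for the
   variable x_(i+1); so X = {x_1, x_2, ...} corresponds to {0, 1, 2, ...}. *)
Definition FAlg (F : fieldType) := {malg F[{fmonom nat}]}.

Definition xvar (F : fieldType) (i : nat) : FAlg F := << FMonom [:: i] >>.

(* The non-unitary free algebra F<X> is the augmentation ideal: polynomials
   with zero coefficient on the empty word. *)
Definition nonunital (F : fieldType) (f : FAlg F) : Prop :=
  f@_(FMonom [::]) = 0.

Definition is_ideal (F : fieldType) (I : FAlg F -> Prop) : Prop :=
  [/\ (forall f, I f -> nonunital f),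
      I 0,
      (forall f g, I f -> I g -> I (f + g)),
      (forall (c : F) f, I f -> I (c *: f)) &
      (forall a f, nonunital a -> I f -> I (a * f) /\ I (f * a))].

(* Algebra endomorphisms of F<X> (maps defined on the carrier FAlg F,
   only their behaviour on F<X> matters). *)
Definition is_endo (F : fieldType) (phi : FAlg F -> FAlg F) : Prop :=
  [/\ (forall f, nonunital f -> nonunital (phi f)),
      (forall f g, nonunital f -> nonunital g -> phi (f + g) = phi f + phi g),
      (forall (c : F) f, nonunital f -> phi (c *: f) = c *: phi f) &
      (forall f g, nonunital f -> nonunital g -> phi (f * g) = phi f * phi g)].

Definition is_Tideal (F : fieldType) (I : FAlg F -> Prop) : Prop :=
  is_ideal I /\ forall phi, is_endo phi -> forall f, I f -> I (phi f).

Definition in_xn_T (F : fieldType) (n : nat) (f : FAlg F) : Prop :=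
  forall I : FAlg F -> Prop, is_Tideal I -> I (xvar F 0 ^+ n) -> I f.

(* V_m: multilinear polynomials of degree m in x_1, ..., x_m, i.e. the span
   of the words x_{s(1)} ... x_{s(m)}, s a permutation. *)
Definition in_V (F : fieldType) (m : nat) (f : FAlg F) : Prop :=
  forall w : {fmonom nat}, f@_w != 0 -> perm_eq (w : seq nat) (iota 0 m).

Definition in_W (F : fieldType) (n m : nat) (f : FAlg F) : Prop :=
  in_V m f /\ in_xn_T n f.

(* An ordered partition of [m] (letters 0..m-1 standing for x_1..x_m) into
   n parts, given as an enumeration A_1, ..., A_n of its blocks: each block is
   a nonempty list, and the concatenation of the blocks is a permutation of
   [m] (i.e. blocks are duplicate-free, pairwise disjoint, cover [m]). *)
Definition ord_partition (n m : nat) (A : 'I_n -> seq nat) : Prop :=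
  (forall i, A i != [::]) /\
  perm_eq (flatten [seq A i | i <- enum 'I_n]) (iota 0 m).

Definition xlist (F : fieldType) (A : seq nat) : FAlg F :=
  \prod_(a <- A) xvar F a.

Definition P_O (F : fieldType) (n : nat) (A : 'I_n -> seq nat) : FAlg F :=
  \sum_(s : 'S_n) \prod_(i < n) xlist F (A (s i)).

Definition in_span_P (F : fieldType) (n m : nat) (f : FAlg F) : Prop :=
  exists k (c : 'I_k -> F) (O : 'I_k -> ('I_n -> seq nat)),
    (forall j, ord_partition m (O j)) /\
    f = \sum_(j < k) c j *: P_O F (O j).

(* Main.v *)
Require Import Defs.
From HB Require Import structures.
From mathcomp Require Import all_boot all_order all_algebra all_fingroup.
From mathcomp Require Import monalg.
From mathcomp Require Import zify.
Set Implicit Arguments. Unset Strict Implicit. Unset Printing Implicit Defensive.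
Import GRing.Theory.
Local Open Scope ring_scope.


Section Basics.
Variable F : fieldType.
Local Notation A := (FAlg F).

Lemma malgC_comm (c : F) (g : A) : c%:MP * g = g * c%:MP.
Proof.
rewrite mul_malgC malgM_def malgZ_def fgmulgU /fgscale.
by apply: eq_bigr => k _; rewrite mulrC mulm1.
Qed.

Lemma scalerAr_A (c : F) (x y : A) : c *: (x * y) = x * (c *: y).
Proof. by rewrite -!mul_malgC mulrA malgC_comm -mulrA. Qed.

Lemma one_fm : (mone : {fmonom nat}) = FMonom [::].
Proof. by rewrite /mone /one /= fmoneE. Qed.

Lemma mc1M (x y : A) : (x * y)@_(FMonom [::]) = x@_(FMonom [::]) * y@_(FMonom [::]).
Proof. by rewrite -one_fm (rmorphM (@mcoeff _ F mone)). Qed.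

Lemma nu0 : nonunital (0 : A).
Proof. by rewrite /nonunital mcoeff0. Qed.
Lemma nuD (x y : A) : nonunital x -> nonunital y -> nonunital (x + y).
Proof. by rewrite /nonunital mcoeffD => -> ->; rewrite addr0. Qed.
Lemma nuZ c (x : A) : nonunital x -> nonunital (c *: x).
Proof. by rewrite /nonunital mcoeffZ => ->; rewrite mulr0. Qed.
Lemma nuN (x : A) : nonunital x -> nonunital (- x).
Proof. by rewrite /nonunital mcoeffN => ->; rewrite oppr0. Qed.
Lemma nuMl (x y : A) : nonunital x -> nonunital (x * y).
Proof. by rewrite /nonunital mc1M => ->; rewrite mul0r. Qed.
Lemma nuMr (x y : A) : nonunital y -> nonunital (x * y).
Proof. by rewrite /nonunital mc1M => ->; rewrite mulr0. Qed.
Lemma nuX (x : A) k : nonunital x -> nonunital (x ^+ k.+1).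
Proof. by move=> h; rewrite exprS; apply: nuMl. Qed.
Lemma nu_sum (I : Type) (r : seq I) (G : I -> A) :
  (forall i, nonunital (G i)) -> nonunital (\sum_(i <- r) G i).
Proof. by move=> h; elim/big_ind: _ => //; [apply: nu0 | apply: nuD]. Qed.

Definition nupart (g : A) : A := g - (g@_(FMonom [::]))%:MP.
Lemma nupart_nu g : nonunital (nupart g).
Proof. by rewrite /nonunital /nupart mcoeffB mcoeffC -one_fm eqxx mulr1n subrr. Qed.
Lemma nupart_id g : nonunital g -> nupart g = g.
Proof. by rewrite /nupart /nonunital => ->; rewrite malgC0E subr0. Qed.

Lemma malgUM (k1 k2 : {fmonom nat}) : (<< k1 >> : A) * << k2 >> = << mmul k1 k2 >>.
Proof. by rewrite malgM_def fgmulUU mulr1. Qed.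

Lemma xlistE (s : seq nat) : xlist F s = << FMonom s >>.
Proof.
elim: s => [|a s IH]; first by rewrite /xlist big_nil -one_fm.
rewrite /xlist big_cons -/(xlist F s) IH /xvar malgUM.
by congr (<< _ >>); apply/eqP; rewrite fmP fmM.
Qed.

Lemma prod_monoms (I : Type) (r : seq I) (B : I -> seq nat) :
  \prod_(i <- r) (<< FMonom (B i) >> : A) = << FMonom (flatten (map B r)) >>.
Proof.
elim: r => [|a r IH]; first by rewrite big_nil -one_fm.
rewrite big_cons IH malgUM; congr (<< _ >>); apply/eqP; rewrite fmP fmM //.
Qed.

Lemma scaleU (c : F) (k : {fmonom nat}) : c *: (<< k >> : A) = << c *g k >>.
Proof. by apply/malgP => k'; rewrite mcoeffZ !mcoeffU mulr_natr. Qed.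

End Basics.


Section Extract.
Variable F : fieldType.
Hypothesis char0 : [pchar F] =i pred0.
Local Notation A := (FAlg F).

Lemma natr_neq0 (k : nat) : (0 < k)%N -> (k%:R : F) != 0.
Proof. by move=> hk; rewrite (pcharf0P F).1 // -lt0n. Qed.

Variable P : A -> Prop.
Hypothesis P0 : P 0.
Hypothesis PD : forall x y, P x -> P y -> P (x + y).
Hypothesis PZ : forall (c : F) x, P x -> P (c *: x).

Lemma PB x y : P x -> P y -> P (x - y).
Proof. by move=> hx hy; apply: PD => //; rewrite -scaleN1r; apply: PZ. Qed.

Lemma Psum (I : Type) (r : seq I) (G : I -> A) :
  (forall i, P (G i)) -> P (\sum_(i <- r) G i).
Proof. by move=> h; elim/big_ind: _ => //; apply: PD. Qed.

Lemma Pscale_inv (c : F) x : c != 0 -> P (c *: x) -> P x.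
Proof. by move=> hc /(PZ c^-1); rewrite scalerA mulVf // scale1r. Qed.

Lemma extract N (z : nat -> A) :
  (forall t : F, P (\sum_(d < N) t ^+ d *: z d)) -> forall d, (d < N)%N -> P (z d).
Proof.
elim: N z => [|N IH] z H d Hd; first by [].
have Hz' : forall t : F,
    P (\sum_(d < N) t ^+ d *: (((2 : F) ^+ d - 2 ^+ N) *: z d)).
  move=> t.
  have -> : \sum_(d < N) t ^+ d *: (((2 : F) ^+ d - 2 ^+ N) *: z d) =
      \sum_(d < N.+1) (2 * t) ^+ d *: z d - 2 ^+ N *: \sum_(d < N.+1) t ^+ d *: z d.
    rewrite scaler_sumr -sumrB big_ord_recr /= exprMn scalerA -scalerBl.
    rewrite subrr scale0r addr0.
    apply: eq_bigr => i _; rewrite !scalerA -scalerBl exprMn mulrBr.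
    by rewrite ![t ^+ i * _]mulrC.
  by apply: PB; [apply: H | apply: PZ].
have Hlt : forall d, (d < N)%N -> P (z d).
  move=> d' hd'; apply: (@Pscale_inv ((2 : F) ^+ d' - 2 ^+ N)); last exact: (IH (fun d => ((2 : F) ^+ d - 2 ^+ N) *: z d) Hz' d' hd').
  rewrite -!natrX subr_eq0 eq_sym; apply/negP => /eqP /(congr1 (fun x => x - (2 ^ d')%:R)).
  rewrite subrr -natrB; last by rewrite leq_exp2l // ltnW.
  move/eqP; rewrite (pcharf0P F).1 // subn_eq0 leq_exp2l // => /(leq_trans hd').
  by rewrite ltnn.
have [hdN|] := ltnP d N; first exact: Hlt.
move=> hNd; have -> : d = N by apply/eqP; rewrite eqn_leq hNd -ltnS Hd.
have := H 1; rewrite big_ord_recr /=.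
have -> : \sum_(i < N) 1 ^+ i *: z i = \sum_(i < N) z i.
  by apply: eq_bigr => i _; rewrite expr1n scale1r.
rewrite expr1n scale1r => h1.
have -> : z N = \sum_(i < N) z i + z N - \sum_(i < N) z i by rewrite addrC addKr.
by apply: PB => //; apply: Psum => i; apply: Hlt.
Qed.

End Extract.


Section Expand.
Variable F : fieldType.
Local Notation A := (FAlg F).

Fixpoint E (x y : nat -> A) (N d : nat) : A :=
  match N with
  | 0 => (d == 0)%:R
  | N'.+1 => E x y N' d * x N' + (if d is d'.+1 then E x y N' d' * y N' else 0)
  end.

Lemma E_gt (x y : nat -> A) N d : (N < d)%N -> E x y N d = 0.
Proof.
elim: N d => [|N IH] [|d] //= h.
by rewrite (IH d.+1) ?(IH d) ?mul0r ?addr0 // ltnW.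
Qed.

Lemma E0 (x y : nat -> A) N : E x y N 0 = \prod_(i < N) x i.
Proof. by elim: N => [|N IH] /=; rewrite ?big_ord0 // big_ord_recr /= IH addr0. Qed.

Lemma E1 (x y : nat -> A) N : E x y N 1 =
  \sum_(j < N) \prod_(i < N) (if i == j :> nat then y i else x i).
Proof.
elim: N => [|N IH] /=; first by rewrite big_ord0.
rewrite IH E0 big_ord_recr /= mulr_suml; congr (_ + _).
  apply: eq_bigr => j _; rewrite big_ord_recr /=.
  by rewrite (_ : (N == j :> nat) = false) // eq_sym ltn_eqF.
rewrite big_ord_recr /= eqxx; congr (_ * _); apply: eq_bigr => i _.
by rewrite ltn_eqF.
Qed.

Lemma expand (x y : nat -> A) N (t : F) :
  \prod_(i < N) (x i + t *: y i) = \sum_(d < N.+1) t ^+ d *: E x y N d.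
Proof.
elim: N => [|N IH]; first by rewrite big_ord0 big_ord1 /= expr0 scale1r.
rewrite big_ord_recr /= IH mulrDr mulr_suml mulr_suml.
rewrite [in RHS](eq_bigr (fun d : 'I_N.+2 => t ^+ d *: (E x y N d * x N) +
   t ^+ d *: (if (d : nat) is d'.+1 then E x y N d' * y N else 0))); last first.
  by move=> d _ /=; rewrite scalerDr.
rewrite big_split /=; congr (_ + _).
  rewrite [in RHS]big_ord_recr /= E_gt // mul0r scaler0 addr0.
  by apply: eq_bigr => d _; rewrite -scalerAl.
rewrite [in RHS]big_ord_recl /= scaler0 add0r.
apply: eq_bigr => d _.
by rewrite -scalerAl -scalerAr_A scalerA /bump /= add1n add0n exprSr.
Qed.

Lemma Qpow (g b : A) N j : (j < N)%N ->
  \prod_(i < N) (if i == j :> nat then b else g) = g ^+ j * b * g ^+ (N.-1 - j).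
Proof.
elim: N j => [|N IH] [|j] //= hj.
  rewrite big_ord_recl /= expr0 mul1r subn0; congr (_ * _).
  by rewrite prodr_const card_ord.
rewrite big_ord_recl /=.
rewrite (eq_bigr (fun i : 'I_N => if i == j :> nat then b else g)); last first.
  by move=> i _; rewrite /bump /= add1n eqSS.
have e : (N - j.+1 = N.-1 - j)%N by lia.
by rewrite (IH j hj) exprS -!mulrA e.
Qed.

End Expand.

Lemma QpowO (F : fieldType) (g b : FAlg F) N (j : 'I_N) :
  \prod_(i < N) (if i == j :> nat then b else g) = g ^+ j * b * g ^+ (N.-1 - j).
Proof. exact: Qpow (ltn_ord j). Qed.


Section Kn.
Variable F : fieldType.
Hypothesis char0 : [pchar F] =i pred0.
Local Notation A := (FAlg F).
Variable n : nat.
Hypothesis n_gt0 : (0 < n)%N.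

Definition Kn (f : A) : Prop :=
  exists s : seq (F * A), f = \sum_(p <- s) p.1 *: (nupart p.2) ^+ n.

Lemma K0 : Kn 0.
Proof. by exists [::]; rewrite big_nil. Qed.

Lemma KD f g : Kn f -> Kn g -> Kn (f + g).
Proof. by move=> [s1 ->] [s2 ->]; exists (s1 ++ s2); rewrite big_cat. Qed.

Lemma KZ c f : Kn f -> Kn (c *: f).
Proof.
move=> [s ->]; exists [seq (c * p.1, p.2) | p <- s].
by rewrite big_map scaler_sumr; apply: eq_bigr => p _; rewrite scalerA.
Qed.

Lemma Kpow h : nonunital h -> Kn (h ^+ n).
Proof.
by move=> hh; exists [:: (1, h)]; rewrite big_cons big_nil addr0 scale1r nupart_id.
Qed.

Lemma Knu f : Kn f -> nonunital f.
Proof.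
move=> [s ->]; apply: nu_sum => p; apply: nuZ.
by case: n n_gt0 => // k _; apply: nuX; apply: nupart_nu.
Qed.

Let extractK := @extract F char0 Kn K0 KD KZ.

Lemma prod_const_pow (g : A) N : \prod_(i < N) g = g ^+ N.
Proof. by rewrite prodr_const card_ord. Qed.

Lemma Keq p q : p = q -> Kn p -> Kn q.
Proof. by move=> ->. Qed.

Lemma Kpow1 h : nonunital h -> Kn (h ^+ n.+1).
Proof.
move=> hh.
have H1 : forall t : F,
    Kn (\sum_(d < n.+1) t ^+ d *: E (fun _ => h) (fun _ => h * h) n d).
  move=> t; rewrite -(expand (fun _ => h) (fun _ => h * h)) prod_const_pow.
  by apply: Kpow; apply: nuD => //; apply: nuZ; apply: nuMl.
have := extractK H1 (d := 1%N); rewrite E1 ltnS n_gt0 => /(_ isT).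
rewrite (eq_bigr (fun _ => h ^+ n.+1)); last first.
  move=> j _; rewrite QpowO mulrA -!exprSr -exprD.
  have e : (j.+2 + (n.-1 - j) = n.+1)%N by have := ltn_ord j; lia.
  by rewrite e.
rewrite sumr_const card_ord -scaler_nat => /(KZ (n%:R)^-1).
by rewrite scalerA mulVf ?scale1r // natr_neq0.
Qed.

Lemma KmulL a g : nonunital a -> nonunital g -> Kn (a * g ^+ n).
Proof.
move=> ha hg.
have HT : forall t : F,
    Kn (\sum_(d < n.+2) t ^+ d *: E (fun _ => g) (fun _ => a) n.+1 d).
  move=> t; rewrite -(expand (fun _ => g) (fun _ => a)) prod_const_pow.
  by apply: Kpow1; apply: nuD => //; apply: nuZ.
have HB : forall t : F,
    Kn (\sum_(d < n.+1) t ^+ d *: E (fun _ => g) (fun _ => g * a) n d).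
  move=> t; rewrite -(expand (fun _ => g) (fun _ => g * a)) prod_const_pow.
  by apply: Kpow; apply: nuD => //; apply: nuZ; apply: nuMl.
have := extractK HT (d := 1%N); rewrite E1 => /(_ isT) hT.
have := extractK HB (d := 1%N); rewrite E1 ltnS n_gt0 => /(_ isT) hB.
apply: (Keq _ (PB KD KZ hT hB)).
rewrite big_ord_recl /= (Qpow _ _ (ltn0Sn n)) expr0 mul1r subn0.
rewrite (eq_bigr (fun j : 'I_n => g ^+ j.+1 * a * g ^+ (n.-1 - j))); last first.
  move=> j _; have hj : (bump 0 j < n.+1)%N by rewrite /bump add1n ltnS.
  rewrite (Qpow _ _ hj) /bump add1n /=.
  have e : (n - j.+1 = n.-1 - j)%N by lia.
  by rewrite e.
have -> : \sum_(j < n) \prod_(i < n) (if i == j :> nat then g * a else g) =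
   \sum_(j < n) g ^+ j.+1 * a * g ^+ (n.-1 - j).
  by apply: eq_bigr => j _; rewrite QpowO mulrA -exprSr.
by rewrite addrK.
Qed.

Lemma KmulR a g : nonunital a -> nonunital g -> Kn (g ^+ n * a).
Proof.
move=> ha hg.
have HT : forall t : F,
    Kn (\sum_(d < n.+2) t ^+ d *: E (fun _ => g) (fun _ => a) n.+1 d).
  move=> t; rewrite -(expand (fun _ => g) (fun _ => a)) prod_const_pow.
  by apply: Kpow1; apply: nuD => //; apply: nuZ.
have HB : forall t : F,
    Kn (\sum_(d < n.+1) t ^+ d *: E (fun _ => g) (fun _ => a * g) n d).
  move=> t; rewrite -(expand (fun _ => g) (fun _ => a * g)) prod_const_pow.
  by apply: Kpow; apply: nuD => //; apply: nuZ; apply: nuMl.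
have := extractK HT (d := 1%N); rewrite E1 => /(_ isT) hT.
have := extractK HB (d := 1%N); rewrite E1 ltnS n_gt0 => /(_ isT) hB.
apply: (Keq _ (PB KD KZ hT hB)).
rewrite big_ord_recr /= (Qpow _ _ (ltnSn n)) subnn expr0 mulr1.
rewrite (eq_bigr (fun j : 'I_n => g ^+ j * a * g ^+ (n - j))); last first.
  by move=> j _; rewrite (Qpow g a (leqW (ltn_ord j))).
have -> : \sum_(j < n) \prod_(i < n) (if i == j :> nat then a * g else g) =
   \sum_(j < n) g ^+ j * a * g ^+ (n - j).
  apply: eq_bigr => j _; rewrite QpowO -!mulrA -exprS.
  have e : ((n.-1 - j).+1 = n - j)%N by have := ltn_ord j; lia.
  by rewrite e.
by rewrite addrAC subrr add0r.
Qed.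

Lemma Kmul a f : nonunital a -> Kn f -> Kn (a * f) /\ Kn (f * a).
Proof.
move=> ha [s ->]; rewrite mulr_sumr mulr_suml; split.
  elim/big_ind: _ => //; [exact: K0 | exact: KD | move=> p _].
  by rewrite -scalerAr_A; apply: KZ; apply: KmulL => //; apply: nupart_nu.
elim/big_ind: _ => //; [exact: K0 | exact: KD | move=> p _].
by rewrite -scalerAl; apply: KZ; apply: KmulR => //; apply: nupart_nu.
Qed.

Lemma K_ideal : is_ideal Kn.
Proof. by split; [exact: Knu | exact: K0 | exact: KD | exact: KZ | exact: Kmul]. Qed.

Lemma endo0 (phi : A -> A) : is_endo phi -> phi 0 = 0.
Proof.
case=> _ hD _ _; have := hD 0 0 (nu0 F) (nu0 F); rewrite addr0 => e.
by rewrite -[LHS](addrK (phi 0)) -e subrr.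
Qed.

Lemma endo_pow (phi : A -> A) g k : is_endo phi -> nonunital g ->
  phi (g ^+ k.+1) = (phi g) ^+ k.+1.
Proof.
move=> hphi hg; elim: k => [|k IH]; first by rewrite !expr1.
case: hphi => _ _ _ hM.
by rewrite exprSr hM ?IH -?exprSr //; apply: nuX.
Qed.

Lemma K_T (phi : A -> A) f : is_endo phi -> Kn f -> Kn (phi f).
Proof.
move=> hphi [s ->]; elim: s => [|p s IH]; first by rewrite big_nil endo0 //; exact: K0.
rewrite big_cons; have [hnu hD hZ hM] := hphi.
have nup : nonunital ((nupart p.2) ^+ n).
  by case: n n_gt0 => // k _; apply: nuX; apply: nupart_nu.
rewrite hD; last 2 first.
- exact: nuZ.
- by apply: nu_sum => q; apply: nuZ; case: n n_gt0 => // k _; apply: nuX; apply: nupart_nu.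
apply: KD => //; rewrite hZ //.
apply: KZ; have en : n = n.-1.+1 by rewrite prednK.
rewrite [in phi _]en endo_pow //; last exact: nupart_nu.
by rewrite -en; apply: Kpow; apply: hnu; apply: nupart_nu.
Qed.

Lemma K_Tideal : is_Tideal Kn.
Proof. split; [exact: K_ideal | move=> phi hphi f; exact: K_T]. Qed.

Lemma xvar_nu i : nonunital (xvar F i).
Proof. by rewrite /nonunital /xvar mcoeffU1. Qed.

Lemma in_xn_K f : in_xn_T n f -> Kn f.
Proof. by move=> h; apply: h; [exact: K_Tideal | apply: Kpow; apply: xvar_nu]. Qed.

End Kn.


Section ML.
Variable F : fieldType.
Local Notation A := (FAlg F).
Variables n m : nat.

Definition ordb (B : 'I_n -> seq nat) : bool :=
  [forall i, B i != [::]] && perm_eq (flatten [seq B i | i <- enum 'I_n]) (iota 0 m).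

Lemma ordbP B : reflect (ord_partition m B) (ordb B).
Proof.
apply: (iffP andP) => [[/forallP h1 h2]|[h1 h2]]; split => //.
by apply/forallP.
Qed.

Definition ML (f : A) : A :=
  [malg w in msupp f => if perm_eq (w : seq nat) (iota 0 m) then f@_w else 0].

Lemma MLE f w : (ML f)@_w = if perm_eq (w : seq nat) (iota 0 m) then f@_w else 0.
Proof.
rewrite /ML mcoeffE; case: ifP => // /negbT hw.
by rewrite (mcoeff_outdom hw); case: ifP.
Qed.

Lemma MLD f g : ML (f + g) = ML f + ML g.
Proof. by apply/malgP => w; rewrite mcoeffD !MLE mcoeffD; case: ifP; rewrite ?addr0. Qed.

Lemma MLZ c f : ML (c *: f) = c *: ML f.
Proof. by apply/malgP => w; rewrite mcoeffZ !MLE mcoeffZ; case: ifP; rewrite ?mulr0. Qed.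

Lemma ML0 : ML 0 = 0.
Proof. by apply/malgP => w; rewrite MLE mcoeff0; case: ifP. Qed.

Lemma ML_sum (I : Type) (r : seq I) (G : I -> A) :
  ML (\sum_(i <- r) G i) = \sum_(i <- r) ML (G i).
Proof. exact: (big_morph ML MLD ML0). Qed.

Lemma ML_V f : in_V m f -> ML f = f.
Proof.
move=> hV; apply/malgP => w; rewrite MLE; case: ifP => // hw.
apply/eqP; apply: contraFT hw => h; apply: hV; by rewrite eq_sym.
Qed.

Lemma MLU (w : {fmonom nat}) :
  ML << w >> = if perm_eq (w : seq nat) (iota 0 m) then << w >> else 0.
Proof.
apply/malgP => k; rewrite MLE mcoeffU1.
case: (eqVneq w k) => [->|ne]; first by case: ifP; rewrite ?mcoeff0 ?mcoeffU1 ?eqxx.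
by case: ifP; case: ifP; rewrite ?mcoeff0 ?mcoeffU1 ?(negbTE ne).
Qed.

Lemma perm_index_enum (s : 'S_n) :
  perm_eq [seq s i | i <- index_enum 'I_n] (enum 'I_n).
Proof.
apply: uniq_perm; first by rewrite (map_inj_uniq (@perm_inj _ s)) index_enum_uniq.
  exact: enum_uniq.
move=> x; rewrite mem_enum; apply/mapP; exists (s^-1 x)%g; first exact: mem_index_enum.
by rewrite permKV.
Qed.

Lemma P_OE (B : 'I_n -> seq nat) :
  P_O F B = \sum_(s : 'S_n) << FMonom (flatten [seq B (s i) | i <- index_enum 'I_n]) >>.
Proof.
apply: eq_bigr => s _.
rewrite (eq_bigr (fun i => << FMonom (B (s i)) >>)); last by move=> i _; rewrite xlistE.
by rewrite prod_monoms.
Qed.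

Lemma perm_blocks (B : 'I_n -> seq nat) (s : 'S_n) :
  perm_eq (flatten [seq B (s i) | i <- index_enum 'I_n])
          (flatten [seq B i | i <- enum 'I_n]).
Proof.
apply: perm_flatten.
have -> : [seq B (s i) | i <- index_enum 'I_n] =
  [seq B i | i <- [seq s i | i <- index_enum 'I_n]] by rewrite -map_comp.
by apply: perm_map; exact: perm_index_enum.
Qed.

Lemma ML_P_O (B : 'I_n -> seq nat) : (forall i, B i != [::]) ->
  ML (P_O F B) = if ordb B then P_O F B else 0.
Proof.
move=> hB; rewrite P_OE ML_sum.
have -> : ordb B = perm_eq (flatten [seq B i | i <- enum 'I_n]) (iota 0 m).
  by rewrite /ordb (_ : [forall i, B i != [::]] = true) //; apply/forallP.
case: ifP => hp.
  apply: eq_bigr => s _; rewrite MLU /=.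
  by rewrite (perm_trans (perm_blocks B s) hp).
rewrite big1 // => s _; rewrite MLU /=.
case: ifP => // hs; exfalso; move/negbT: hp; apply/negP.
have h1 := perm_blocks B s; rewrite perm_sym in h1; by rewrite negbK (perm_trans h1 hs).
Qed.

End ML.


Lemma prodZ (F : fieldType) (I : Type) (r : seq I) (c : I -> F) (x : I -> FAlg F) :
  \prod_(i <- r) (c i *: x i) = (\prod_(i <- r) c i) *: \prod_(i <- r) x i.
Proof.
elim: r => [|a r IH]; first by rewrite !big_nil scale1r.
by rewrite !big_cons IH -scalerAl -scalerAr_A scalerA.
Qed.

Section QS.
Variable F : fieldType.
Hypothesis char0 : [pchar F] =i pred0.
Local Notation A := (FAlg F).
Variables n m : nat.
Hypothesis n_gt0 : (0 < n)%N.

Definition QS (f : A) : Prop :=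
  exists s : seq (F * ('I_n -> seq nat)),
    f = \sum_(p <- s) p.1 *: (if ordb m p.2 then P_O F p.2 else 0).

Lemma QS0 : QS 0.
Proof. by exists [::]; rewrite big_nil. Qed.

Lemma QSD f g : QS f -> QS g -> QS (f + g).
Proof. by move=> [s1 ->] [s2 ->]; exists (s1 ++ s2); rewrite big_cat. Qed.

Lemma QSZ c f : QS f -> QS (c *: f).
Proof.
move=> [s ->]; exists [seq (c * p.1, p.2) | p <- s].
by rewrite big_map scaler_sumr; apply: eq_bigr => p _; rewrite scalerA.
Qed.

Lemma QS_span f : QS f -> in_span_P n m f.
Proof.
move=> [s ->].
pose s' := [seq p <- s | ordb m p.2].
have -> : \sum_(p <- s) p.1 *: (if ordb m p.2 then P_O F p.2 else 0) =
          \sum_(p <- s') p.1 *: P_O F p.2.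
  rewrite big_filter [RHS]big_mkcond; apply: eq_bigr => p _.
  by case: ifP; rewrite ?scaler0.
pose d : F * ('I_n -> seq nat) := (0, fun _ => [::]).
have hall : all (fun p => ordb m p.2) s' by apply: filter_all.
exists (size s'), (fun j => (nth d s' j).1), (fun j => (nth d s' j).2); split.
  move=> j; apply/ordbP; exact: (all_nthP d hall j (ltn_ord j)).
by rewrite (big_nth d) big_mkord.
Qed.

Lemma ML_pow h : nonunital h -> QS (ML m (h ^+ n)).
Proof.
move=> hh.
pose ws : seq {fmonom nat} := finmap.enum_fset (msupp h).
pose r := size ws.
pose w (i : 'I_r) : {fmonom nat} := nth mone ws i.
pose c (i : 'I_r) : F := h@_(w i).
pose X (i : 'I_r) : A := c i *: << w i >>.
have hE : h = \sum_(i < r) X i.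
  rewrite {1}(monalgE h) (big_nth mone) big_mkord; apply: eq_bigr => i _.
  by rewrite /X scaleU.
have hpow : h ^+ n = \sum_(f : {ffun 'I_n -> 'I_r}) \prod_(j < n) X (f j).
  rewrite -prod_const_pow; transitivity (\prod_(j < n) \sum_(i < r) X i).
    by apply: eq_bigr => j _; exact: hE.
  exact: (bigA_distr_bigA (fun (j : 'I_n) (i : 'I_r) => X i)).
pose sig (s : 'S_n) (f : {ffun 'I_n -> 'I_r}) : {ffun 'I_n -> 'I_r} :=
  [ffun j => f (s j)].
have sig_inj : forall s, injective (sig s).
  move=> s f1 f2 e; apply/ffunP => x.
  by have := congr1 (fun g : {ffun 'I_n -> 'I_r} => g (s^-1 x)%g) e; rewrite !ffunE permKV.
have hfact : (n`!)%:R *: h ^+ n = \sum_(f : {ffun 'I_n -> 'I_r})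
    (\prod_(j < n) c (f j)) *: P_O F (fun j => (w (f j) : seq nat)).
  transitivity (\sum_(s : 'S_n) h ^+ n).
    by rewrite sumr_const card_Sn scaler_nat.
  rewrite (eq_bigr (fun s : 'S_n => \sum_(f : {ffun 'I_n -> 'I_r})
      \prod_(j < n) X (f (s j)))); last first.
    move=> s _; rewrite hpow (reindex_inj (sig_inj s)); apply: eq_bigr => f _.
    by apply: eq_bigr => j _; rewrite ffunE.
  rewrite exchange_big /=; apply: eq_bigr => f _.
  rewrite /P_O scaler_sumr; apply: eq_bigr => s _.
  rewrite prodZ (reindex_inj (@perm_inj _ s^-1)) /=.
  congr (_ *: _); apply: eq_bigr => j _; first by rewrite permKV.
  by rewrite xlistE fmK.
have hML : ML m (h ^+ n) = \sum_(f : {ffun 'I_n -> 'I_r})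
    ((n`!)%:R^-1 * \prod_(j < n) c (f j)) *:
      (if ordb m (fun j => (w (f j) : seq nat))
       then P_O F (fun j => (w (f j) : seq nat)) else 0).
  have nf : ((n`!)%:R : F) != 0 by apply: natr_neq0 => //; exact: fact_gt0.
  have e1 : h ^+ n = ((n`!)%:R)^-1 *: (((n`!)%:R : F) *: h ^+ n).
    by rewrite scalerA mulVf // scale1r.
  rewrite {1}e1 MLZ hfact ML_sum scaler_sumr.
  apply: eq_bigr => f _; rewrite MLZ scalerA ML_P_O // => j.
  have hin : w (f j) \in ws by rewrite /w; apply: mem_nth; exact: ltn_ord.
  have hin2 : h@_(w (f j)) != 0 by rewrite mcoeff_neq0.
  apply/eqP => e; move: hin2.
  have -> : w (f j) = FMonom [::] by rewrite -e fmK.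
  by rewrite hh eqxx.
rewrite hML.
exists [seq (((n`!)%:R^-1 * \prod_(j < n) c (f j)), (fun j => (w (f j) : seq nat)))
       | f : {ffun 'I_n -> 'I_r} <- index_enum {ffun 'I_n -> 'I_r}].
by rewrite big_map.
Qed.

Lemma forward (f : A) : in_W n m f -> in_span_P n m f.
Proof.
move=> [hV hT]; have [s hs] := in_xn_K char0 n_gt0 hT.
apply: QS_span; rewrite -(ML_V hV) hs ML_sum.
elim/big_ind: _ => //; [exact: QS0 | exact: QSD | move=> p _].
by rewrite MLZ; apply: QSZ; apply: ML_pow; apply: nupart_nu.
Qed.

End QS.


Definition subv (F : fieldType) (h : FAlg F) (a : nat) : FAlg F :=
  if a == 0%N then h else xvar F a.

Definition hm (F : fieldType) (h : FAlg F) (w : {fmonom nat}) : FAlg F :=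
  \prod_(a <- (w : seq nat)) subv h a.

Lemma hm_mmorph (F : fieldType) (h : FAlg F) : mmorphism (hm h).
Proof.
split; last by rewrite /hm fm1 big_nil.
by move=> w1 w2; rewrite /hm fmM big_cat.
Qed.

HB.instance Definition _ (F : fieldType) (h : FAlg F) :=
  isMultiplicative.Build {fmonom nat} (FAlg F) (hm h) (hm_mmorph h).

Section Endo.
Variable F : fieldType.
Local Notation A := (FAlg F).
Variable h : A.
Hypothesis hh : nonunital h.

Definition phi (g : A) : A := mmap (@malgC _ F) (hm h) g.

Lemma phi_mult : multiplicative phi.
Proof. by apply: commr_mmap_is_multiplicative => g k k'; exact: malgC_comm. Qed.

Lemma phiD x y : phi (x + y) = phi x + phi y.
Proof. exact: mmapD. Qed.

Lemma phiZ c x : phi (c *: x) = c *: phi x.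
Proof. by rewrite /phi mmapZ mul_malgC. Qed.

Lemma phiM x y : phi (x * y) = phi x * phi y.
Proof. exact: phi_mult.1. Qed.

Lemma hm_nu (w : {fmonom nat}) : w != FMonom [::] -> nonunital (hm h w).
Proof.
case: w => [[|a s]] // _; rewrite /hm /= big_cons; apply: nuMl.
by rewrite /subv; case: ifP => _ //; exact: xvar_nu.
Qed.

Lemma phi_nu g : nonunital g -> nonunital (phi g).
Proof.
move=> hg; rewrite /phi mmapE /nonunital raddf_sum /= big1 // => k _.
rewrite mcoeffCM; case: (eqVneq k (FMonom [::])) => [->|ne].
  by rewrite hg mul0r.
by rewrite (hm_nu ne) mulr0.
Qed.

Lemma phi_endo : is_endo phi.
Proof.
split=> [g|f g _ _|c f _|f g _ _]; [exact: phi_nu | exact: phiD | exact: phiZ | exact: phiM].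
Qed.

Lemma phi_x0 : phi (xvar F 0) = h.
Proof.
rewrite /phi /xvar mmapU /hm /= big_cons big_nil mulr1 /subv /=.
by rewrite mpolyC1E mul1r.
Qed.

Lemma phi_pow k : phi (xvar F 0 ^+ k.+1) = h ^+ k.+1.
Proof.
elim: k => [|k IH]; first by rewrite !expr1 phi_x0.
by rewrite exprS phiM phi_x0 IH -exprS.
Qed.

End Endo.


Section Lin.
Variable F : fieldType.
Local Notation A := (FAlg F).
Variable n : nat.

Definition Lin (b : 'I_n -> A) : A := \sum_(s : 'S_n) \prod_(i < n) b (s i).

Lemma Lin_perm b (t : 'S_n) : Lin (fun i => b (t i)) = Lin b.
Proof.
rewrite /Lin [RHS](reindex_inj (@mulIg _ t)); apply: eq_bigr => s _.
by apply: eq_bigr => i _; rewrite permM.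
Qed.

Lemma prod_ord_zero N (G : 'I_N -> A) j : G j = 0 -> \prod_(i < N) G i = 0.
Proof.
elim: N G j => [|N IH] G j; first by case: j.
move=> hj.
rewrite big_ord_recr /=.
case: (eqVneq j ord_max) => [ej|nej]; first by rewrite -ej hj mulr0.
have hjN : (j < N)%N.
  by move: (ltn_ord j) nej; rewrite ltnS leq_eqVlt => /orP [/eqP e|//];
     rewrite -val_eqE /= e eqxx.
by rewrite (IH _ (Ordinal hjN)) ?mul0r //=; rewrite -hj; congr G; apply: val_inj.
Qed.

Lemma Lin_zero b j : b j = 0 -> Lin b = 0.
Proof.
move=> hj; rewrite /Lin big1 // => s _; apply: (prod_ord_zero (j := (s^-1 j)%g)).
by rewrite permKV.
Qed.

Lemma count_sum k (v : A) : (k <= n)%N ->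
  \sum_(l < n) (if (l < k)%N then 0 else v) = v *+ (n - k).
Proof.
move=> hk; rewrite -(big_mkord xpredT (fun l => if (l < k)%N then 0 else v)).
rewrite (@big_cat_nat _ _ _ k) //= big1_seq ?add0r; last first.
  by move=> i; rewrite mem_index_iota => /and3P [_ _ ->].
rewrite (eq_big_nat _ _ (F2 := fun _ => v)) ?sumr_const_nat //.
by move=> i /andP [hi _]; rewrite ltnNge hi.
Qed.

End Lin.

Section Claim.
Variable F : fieldType.
Hypothesis char0 : [pchar F] =i pred0.
Local Notation A := (FAlg F).
Variable n : nat.
Hypothesis n_gt0 : (0 < n)%N.
Variable I : A -> Prop.
Hypothesis I0 : I 0.
Hypothesis ID : forall x y, I x -> I y -> I (x + y).
Hypothesis IZ : forall (c : F) x, I x -> I (c *: x).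
Hypothesis Ipow : forall g, nonunital g -> I (g ^+ n).

Definition liftn (x : 'I_n -> A) (i : nat) : A :=
  if (insub i : option 'I_n) is Some o then x o else 0.

Lemma liftnE x (i : 'I_n) : liftn x i = x i.
Proof. by rewrite /liftn valK. Qed.

Lemma Lin_expand (x y : 'I_n -> A) (t : F) :
  Lin (fun i => x i + t *: y i) = \sum_(d < n.+1) t ^+ d *:
     \sum_(s : 'S_n) E (liftn (fun i => x (s i))) (liftn (fun i => y (s i))) n d.
Proof.
rewrite /Lin (eq_bigr (fun s : 'S_n => \sum_(d < n.+1) t ^+ d *:
     E (liftn (fun i => x (s i))) (liftn (fun i => y (s i))) n d)); last first.
  move=> s _; rewrite -expand; apply: eq_bigr => i _; by rewrite !liftnE.
rewrite exchange_big /=; apply: eq_bigr => d _; by rewrite scaler_sumr.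
Qed.

Lemma claim k : (k <= n)%N -> forall g (b : 'I_n -> A), nonunital g ->
  (forall i, nonunital (b i)) -> I (Lin (fun i => if (i < k)%N then b i else g)).
Proof.
elim: k => [|k IH] hk g b hg hb.
  rewrite /Lin (eq_bigr (fun _ => g ^+ n)); last first.
    by move=> s _; rewrite (eq_bigr (fun _ => g)) ?prod_const_pow // => i _; rewrite ltn0.
  by rewrite sumr_const card_Sn -scaler_nat; apply: IZ; apply: Ipow.
pose kk : 'I_n := Ordinal hk.
pose x (i : 'I_n) := if (i < k)%N then b i else g.
pose y (i : 'I_n) := if (i < k)%N then 0 else b kk.
pose tgt (i : 'I_n) := if (i < k.+1)%N then b i else g.
have H1 : forall t : F, I (Lin (fun i => x i + t *: y i)).
  move=> t; have := IH (ltnW hk) (g + t *: b kk) b _ hb.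
  have -> : Lin (fun i : 'I_n => if (i < k)%N then b i else g + t *: b kk) =
            Lin (fun i => x i + t *: y i).
    apply: eq_bigr => s _; apply: eq_bigr => i _.
    by rewrite /x /y; case: ifP; rewrite ?scaler0 ?addr0.
  by apply; apply: nuD => //; apply: nuZ.
have H2 : forall t : F, I (\sum_(d < n.+1) t ^+ d *:
     \sum_(s : 'S_n) E (liftn (fun i => x (s i))) (liftn (fun i => y (s i))) n d).
  by move=> t; rewrite -Lin_expand.
have := @extract F char0 I I0 ID IZ n.+1 (fun d => \sum_(s : 'S_n)
    E (liftn (fun i => x (s i))) (liftn (fun i => y (s i))) n d) H2 1%N.
rewrite ltnS n_gt0 => /(_ isT) /=.
have key : \sum_(s : 'S_n) E (liftn (fun i => x (s i))) (liftn (fun i => y (s i))) n 1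
    = Lin tgt *+ (n - k).
  rewrite (eq_bigr (fun s : 'S_n => \sum_(l < n)
      \prod_(i < n) (if s i == l then y (s i) else x (s i)))); last first.
    move=> s _; rewrite E1 [RHS](reindex_inj (@perm_inj _ s)).
    apply: eq_bigr => j _; apply: eq_bigr => i _.
    by rewrite !liftnE (inj_eq perm_inj).
  rewrite exchange_big /=.
  rewrite (eq_bigr (fun l : 'I_n => if (l < k)%N then 0 else Lin tgt)).
    exact: count_sum (ltnW hk).
  move=> l _; case: ifP => hl.
    apply: (@Lin_zero F n (fun i => if i == l then y i else x i) l).
    by rewrite eqxx /y hl.
  transitivity (Lin (fun i => tgt (tperm l kk i))); last exact: Lin_perm.
  apply: eq_bigr => s _; apply: eq_bigr => i _.
  move: (s i) => j; rewrite /y /x /tgt.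
  case: tpermP => [->|->|ne1 ne2].
  - by rewrite eqxx hl /= ltnSn.
  - rewrite /= ltnn; case: (eqVneq kk l) => [<-|ne]; first by rewrite ltnSn.
    have nel : (k != l :> nat) := ne.
    have : (k < l)%N by lia.
    by rewrite ltnNge ltnS => /negbTE ->.
  - have ejl : (j == l) = false by apply/eqP.
    have ejk : (j < k.+1)%N = (j < k)%N.
      rewrite ltnS leq_eqVlt; case: eqP => // ejk; exfalso; apply: ne2.
      by apply: val_inj.
    by rewrite ejl ejk.
rewrite key -scaler_nat => hI; apply: (Pscale_inv IZ _ hI).
by apply: natr_neq0 => //; rewrite subn_gt0.
Qed.

End Claim.


Section Back.
Variable F : fieldType.
Hypothesis char0 : [pchar F] =i pred0.
Local Notation A := (FAlg F).
Variables n m : nat.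
Hypothesis n_gt0 : (0 < n)%N.

Lemma V0 : in_V m (0 : A).
Proof. by move=> w; rewrite mcoeff0 eqxx. Qed.

Lemma VD (f g : A) : in_V m f -> in_V m g -> in_V m (f + g).
Proof.
move=> hf hg w; rewrite mcoeffD => h.
case: (eqVneq f@_w 0) => [e|]; last exact: hf.
by apply: hg; move: h; rewrite e add0r.
Qed.

Lemma VZ c (f : A) : in_V m f -> in_V m (c *: f).
Proof.
move=> hf w; rewrite mcoeffZ => h; apply: hf.
by apply: contraNneq h => ->; rewrite mulr0.
Qed.

Lemma VU (w : {fmonom nat}) : perm_eq (w : seq nat) (iota 0 m) -> in_V m (<< w >> : A).
Proof. by move=> hw k; rewrite mcoeffU1; case: (eqVneq w k) => [<-|] //; rewrite eqxx. Qed.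

Lemma V_P_O (B : 'I_n -> seq nat) : ord_partition m B -> in_V m (P_O F B).
Proof.
move=> [_ hp]; rewrite P_OE.
elim/big_ind: _ => //; [exact: V0 | exact: VD | move=> s _].
by apply: VU => /=; exact: perm_trans (perm_blocks B s) hp.
Qed.

Lemma xlist_nu (s : seq nat) : s != [::] -> nonunital (xlist F s).
Proof.
move=> hs; rewrite /nonunital xlistE mcoeffU1.
by case: eqP => // [[e]]; move: hs; rewrite e eqxx.
Qed.

Lemma backward (f : A) : in_span_P n m f -> in_W n m f.
Proof.
move=> [k [c [O [hO ->]]]]; split.
  elim/big_ind: _ => //; [exact: V0 | exact: VD | move=> j _].
  by apply: VZ; apply: V_P_O.
move=> I [[_ I0 ID IZ _] hT] hxn.
have Ipow : forall g, nonunital g -> I (g ^+ n).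
  move=> g hg; have := hT (phi g) (phi_endo hg) _ hxn.
  have en : n = n.-1.+1 by rewrite prednK.
  rewrite {1}en phi_pow -en; exact.
elim/big_ind: _; [exact: I0 | exact: ID | move=> j _].
apply: (IZ); have := claim char0 n_gt0 I0 ID IZ Ipow (leqnn n) (g := 0)
   (b := fun i => xlist F (O j i)) (nu0 F).
have hb : forall i, nonunital (xlist F (O j i)).
  by move=> i; apply: xlist_nu; have [h1 _] := hO j; exact: h1.
move=> /(_ hb); congr I; apply: eq_bigr => s _; apply: eq_bigr => i _.
by rewrite ltn_ord.
Qed.

End Back.

Theorem corollary4p5 (F : fieldType) (n m : nat) :
  [pchar F]%R =i pred0 -> (0 < n)%N -> (n <= m)%N ->
  forall f : FAlg F, in_W n m f <-> in_span_P n m f.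
Proof.
move=> char0 hn _ f; split; [exact: forward | exact: backward].
Qed.
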